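(* Let $(X_j,Y_j,S_j)$, $j\in\mathbb{Z}$, be a FAIM process. Then for every $n\ge1$, \[\hat K_{n+1}\le\begin{cases}\psi(0)\,\hat K_n^2 & \text{if } B_{n+1}=0,\\ 2\hat K_n & \text{if } B_{n+1}=1,\end{cases}\] where $\psi(0)=\max_{a\in\mathcal{S}}1/\pi_0(a)$ and $\pi_0$ is the stationary distribution of the state chain.
   Context: FAIM process: $(X_j,Y_j,S_j)$, $j\in\mathbb{Z}$, is strictly stationary, $X_j\in\{0,1\}$, $Y_j$ takes values in a finite alphabet, $S_j$ in a finite set $\mathcal{S}$; the conditional law $P_{X_j,Y_j,S_j|S_{j-1}}$ does not depend on $j$; and conditioned on $S_{j-1}$, $\{X_k,Y_k,S_k\}_{k\ge j}$ is independent of $\{X_l,Y_l,S_{l-1}\}_{l<j}$. The state sequence $(S_j)$ is a homogeneous, finite-state, stationary, aperiodic and irreducible Markov chain. For binary $U$ and finite-valued $Q$, $K(U|Q)=\sum_q|P_{U,Q}(0,q)-P_{U,Q}(1,q)|$; conditioning on several variables means treating the tuple as the observation. Polarization setup: for $n\ge1$, $N=2^n$, $G_N=B_NG_2^{\otimes n}$ with $G_2=\begin{bmatrix}1&0\\1&1\end{bmatrix}$ and $B_N$ the bit-reversal permutation matrix (arithmetic modulo 2); $U_1^N=X_1^NG_N$, $Q_i=(U_1^{i-1},Y_1^N)$. Let $B_1,B_2,\dots$ be i.i.d. Bernoulli$(1/2)$ and, for each $n$, $i-1=\sum_{j=1}^nB_j2^{n-j}$. The boundary-state-informed total variation process is $\hat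 K_n=K(U_i|Q_i,S_N,S_0)$ (with $N=2^n$); $\hat K_{n+1}$ is defined in the same way with $n+1$ in place of $n$ and the same $B_1,B_2,\dots$. *)

(* Defs.v *)
From HB Require Import structures.
From mathcomp Require Import all_boot all_order all_algebra.
From mathcomp Require Import all_classical all_reals all_analysis.
Set Implicit Arguments. Unset Strict Implicit. Unset Printing Implicit Defensive.
Import Order.TTheory GRing.Theory Num.Theory.
Local Open Scope classical_set_scope.
Local Open Scope ring_scope.

(* G_2 = [[1,0],[1,1]] : entry (r,c), r,c in {0,1}, is 1 iff c <= r. *)
Definition G2 (r c : nat) : bool := (c <= r)%N.

(* Kronecker power G_2^{(x)n}, 0-indexed entries (r,c), r,c < 2^n:
   G_2^{(x)(n+1)} = G_2 (x) G_2^{(x)n}. *)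
Fixpoint kronG2 (n : nat) (r c : nat) : bool :=
  match n with
  | 0 => true
  | n'.+1 => G2 (r %/ 2 ^ n') (c %/ 2 ^ n') && kronG2 n' (r %% 2 ^ n') (c %% 2 ^ n')
  end.

Fixpoint bitrev (n r : nat) : nat :=
  match n with
  | 0 => 0
  | n'.+1 => (r %% 2) * 2 ^ n' + bitrev n' (r %/ 2)
  end.

(* G_N = B_N G_2^{(x)n}, B_N the bit-reversal permutation matrix:
   (B_N A)[r][c] = A[bitrev r][c]. 0-indexed entries. *)
Definition GN (n r c : nat) : bool := kronG2 n (bitrev n r) c.

Section FAIM.
Context {d : measure_display} {T : measurableType d} {R : realType}
  (P : probability T R).

Definition Pr (A : set T) : R := fine (P A).

(* total variation quantity K(U|Q) = sum_q |P(U=0,Q=q) - P(U=1,Q=q)|,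
   the value 0 of a binary variable being represented by [false] *)
Definition Kcond (U : T -> bool) (Qt : finType) (Q : T -> Qt) : R :=
  \sum_(q : Qt) `| Pr [set w | U w = false /\ Q w = q]
                 - Pr [set w | U w = true /\ Q w = q] |.

Context {Yt St : finType}
  (X : int -> T -> bool) (Y : int -> T -> Yt) (S : int -> T -> St).

Definition Zp (j : int) (w : T) : bool * Yt * St := (X j w, Y j w, S j w).

Definition win_ev (k : int) (m : nat) (f : 'I_m -> bool * Yt * St) : set T :=
  [set w | forall l : 'I_m, Zp (k + (l : nat)%:Z) w = f l].

Definition past_ev (j : int) (m : nat) (g : 'I_m -> bool * Yt * St) : set T :=
  [set w | forall l : 'I_m,
     let t := (j - (m : nat)%:Z + (l : nat)%:Z)%R in (X t w, Y t w, S (t - 1) w) = g l].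

Definition Sev (j : int) (s : St) : set T := [set w | S j w = s].

(* FAIM process (all random variables finite-valued, conditions on
   finite-dimensional cylinder events) *)
Definition FAIM : Prop :=
  [/\ [/\ (forall j b, measurable [set w | X j w = b]),
          (forall j y, measurable [set w | Y j w = y]) &
          (forall j s, measurable [set w | S j w = s])],
      (forall (k : int) (m : nat) (f : 'I_m -> bool * Yt * St),
          Pr (win_ev k f) = Pr (win_ev 0 f)),
  (* the conditional law P_{X_j,Y_j,S_j | S_{j-1}} does not depend on j *)
      (exists W : St -> bool * Yt * St -> R, forall (j : int) z s,
          Pr ([set w | Zp j w = z] `&` Sev (j - 1) s) = W s z * Pr (Sev (j - 1) s)) &
  (* conditioned on S_{j-1}, {Z_k}_{k>=j} indep. of {X_l,Y_l,S_{l-1}}_{l<j} *)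
      (forall (j : int) (m1 m2 : nat) (f : 'I_m1 -> bool * Yt * St)
              (g : 'I_m2 -> bool * Yt * St) (s : St),
          Pr (win_ev j f `&` past_ev j g `&` Sev (j - 1) s) * Pr (Sev (j - 1) s)
          = Pr (win_ev j f `&` Sev (j - 1) s) * Pr (past_ev j g `&` Sev (j - 1) s))].

Fixpoint Qpow (Q : St -> St -> R) (k : nat) (a b : St) : R :=
  match k with
  | 0 => (a == b)%:R
  | k'.+1 => \sum_(c : St) Qpow Q k' a c * Q c b
  end.

(* the state sequence is a homogeneous, finite-state, stationary, aperiodic
   and irreducible Markov chain *)
Definition state_chain : Prop :=
  (forall (k : int) (a : St), Pr (Sev k a) = Pr (Sev 0 a)) /\
  exists Q : St -> St -> R,
    [/\ (forall a b, 0 <= Q a b), (forall a, \sum_(b : St) Q a b = 1),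
        (forall (j : int) (m : nat) (g : 'I_m -> St) (a b : St),
           let past := [set w | forall l : 'I_m,
                          S (j - 1 - (m : nat)%:Z + (l : nat)%:Z)%R w = g l] in
           Pr (Sev j b `&` Sev (j - 1) a `&` past) = Q a b * Pr (Sev (j - 1) a `&` past)),
        (forall a b, exists k, 0 < Qpow Q k a b) &
        (* aperiodic: gcd {k >= 1 | Q^k(a,a) > 0} = 1 for every state a *)
        (forall a (p : nat),
           (forall k : nat, (0 < k)%N -> 0 < Qpow Q k a a -> (p %| k)%N) -> p = 1%N)].

(* U_1^N = X_1^N G_N; [U n c] is U_{c+1} (0-indexed column c) *)
Definition U (n c : nat) (w : T) : bool :=
  \big[addb/false]_(r < 2 ^ n) (X (r.+1 : nat)%:Z w && GN n r c).

(* hat K_n at index i = c + 1:  K(U_i | U_1^{i-1}, Y_1^N, S_N, S_0), N = 2^n *)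
Definition Khat (n c : nat) : R :=
  Kcond (U n c)
    (fun w => ([ffun k : 'I_c => U n k w],
               [ffun j : 'I_(2 ^ n) => Y (j.+1 : nat)%:Z w],
               S (2 ^ n : nat)%:Z w, S 0 w)).

Definition psi0 : R := \big[Num.max/0]_(a : St) (Pr (Sev 0 a))^-1.

End FAIM.

(* Main.v *)
Require Import Defs.
From HB Require Import structures.
From mathcomp Require Import all_boot all_order all_algebra.
From mathcomp Require Import all_classical all_reals all_analysis.
From mathcomp Require Import ring lra zify.
Import Order.TTheory GRing.Theory Num.Theory.

Module PropHelpers.

Lemma kron_low n x y : (x < 2 ^ n.+1)%N -> (y < 2 ^ n.+1)%N ->
  kronG2 n.+1 x y = G2 (x %% 2) (y %% 2) && kronG2 n (x %/ 2) (y %/ 2).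
Proof.
elim: n x y => [|n IH] x y hx hy.
  rewrite /= !divn1 !modn_small //.
have e1 : forall z, (z %/ 2 ^ n.+1 = z %/ 2 %/ 2 ^ n)%N.
  by move=> z; rewrite expnS divnMA.
have e2 : forall z, (z %% 2 ^ n.+1 %% 2 = z %% 2)%N.
  by move=> z; rewrite modn_dvdm // expnS dvdn_mulr.
have e3 : forall z, (z %% 2 ^ n.+1 %/ 2 = z %/ 2 %% 2 ^ n)%N.
  by move=> z; rewrite modn_divl expnSr.
have hp : (0 < 2 ^ n.+1)%N by rewrite expn_gt0.
change (kronG2 n.+2 x y) with (G2 (x %/ 2 ^ n.+1) (y %/ 2 ^ n.+1) && kronG2 n.+1 (x %% 2 ^ n.+1) (y %% 2 ^ n.+1)).
change (kronG2 n.+1 (x %/ 2) (y %/ 2)) with (G2 (x %/ 2 %/ 2 ^ n) (y %/ 2 %/ 2 ^ n) && kronG2 n (x %/ 2 %% 2 ^ n) (y %/ 2 %% 2 ^ n)).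
rewrite IH ?ltn_pmod // !e1 !e2 !e3.
by rewrite andbCA.
Qed.

Lemma bitrev_lt n r : (bitrev n r < 2 ^ n)%N.
Proof.
elim: n r => [|n IH] r //=.
have := IH (r %/ 2); have : (r %% 2 * 2 ^ n <= 1 * 2 ^ n)%N.
  by rewrite leq_mul2r modn2 leq_b1 orbT.
rewrite expnS; lia.
Qed.

Lemma bitrev_top n r : (r < 2 ^ n.+1)%N ->
  bitrev n.+1 r = (2 * bitrev n (r %% 2 ^ n) + r %/ 2 ^ n)%N.
Proof.
elim: n r => [|n IH] r hr.
  by rewrite /= expn0 muln1 divn1 addn0 muln0 add0n modn_small.
have e1 : forall z, (z %/ 2 ^ n.+1 = z %/ 2 %/ 2 ^ n)%N.
  by move=> z; rewrite expnS divnMA.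
have e2 : forall z, (z %% 2 ^ n.+1 %% 2 = z %% 2)%N.
  by move=> z; rewrite modn_dvdm // expnS dvdn_mulr.
have e3 : forall z, (z %% 2 ^ n.+1 %/ 2 = z %/ 2 %% 2 ^ n)%N.
  by move=> z; rewrite modn_divl expnSr.
change (bitrev n.+2 r) with (r %% 2 * 2 ^ n.+1 + bitrev n.+1 (r %/ 2))%N.
change (bitrev n.+1 (r %% 2 ^ n.+1)) with
  (r %% 2 ^ n.+1 %% 2 * 2 ^ n + bitrev n (r %% 2 ^ n.+1 %/ 2))%N.
rewrite IH; last by rewrite ltn_divLR // -expnSr.
rewrite e1 e2 e3 expnS.
rewrite mulnDr addnA; congr (_ + _)%N; rewrite mulnCA; lia.
Qed.

Lemma GN_split n r k : (r < 2 ^ n.+1)%N -> (k < 2 ^ n.+1)%N ->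
  GN n.+1 r k = ((k %% 2 <= r %/ 2 ^ n)%N && GN n (r %% 2 ^ n) (k %/ 2)).
Proof.
move=> hr hk; rewrite /GN bitrev_top //.
have hb := bitrev_lt n (r %% 2 ^ n).
have ht : (r %/ 2 ^ n < 2)%N by rewrite ltn_divLR ?expn_gt0 // -expnS.
rewrite kron_low //; last by rewrite expnS; lia.
rewrite mulnC modnMDl divnMDl // (modn_small ht) (divn_small ht) addn0.
by [].
Qed.

Definition Wh {T : Type} (X : int -> T -> bool) n c w :=
  \big[addb/false]_(r < 2 ^ n) (X (Posz (2 ^ n + r).+1) w && GN n r c).

Lemma big_andb_l (s : seq nat) (a : bool) (F : nat -> bool) :
  \big[addb/false]_(i <- s) (a && F i) = a && \big[addb/false]_(i <- s) F i.
Proof.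
case: a => /=; first by [].
by rewrite big1.
Qed.

Lemma U_split d (T : measurableType d) (X : int -> T -> bool) n k w : (k < 2 ^ n.+1)%N ->
  U X n.+1 k w = (~~ odd k && U X n k./2 w) (+) Wh X n k./2 w.
Proof.
move=> hk; rewrite /U /Wh.
rewrite -(big_mkord (fun _ => true) (fun r => X (Posz r.+1) w && GN n.+1 r k)).
rewrite (big_cat_nat _ (n := (2 ^ n)%N)) //=; last by rewrite expnS; lia.
rewrite -(add0n (2 ^ n)) big_addn add0n.
have -> : (2 ^ n.+1 - 2 ^ n = 2 ^ n)%N by rewrite expnS; lia.
rewrite -(big_mkord (fun _ => true) (fun r => X (Posz r.+1) w && GN n r k./2)).
rewrite -(big_mkord (fun _ => true) (fun r => X (Posz (2 ^ n + r).+1) w && GN n r k./2)).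
rewrite -big_andb_l; congr addb.
  apply: eq_big_nat => r /andP [_ hr].
  rewrite GN_split; [|by rewrite expnS; lia|by []].
  rewrite (divn_small hr) (modn_small hr) modn2 divn2.
  by case: (odd k) => //=; rewrite andbF.
apply: eq_big_nat => r /andP [_ hr].
rewrite GN_split; [|by rewrite expnS; lia|by []].
have -> : ((r + 2 ^ n) %/ 2 ^ n = 1)%N.
  by rewrite divnDr ?dvdnn // divnn expn_gt0 /= divn_small.
have -> : (k %% 2 <= 1)%N by rewrite modn2 leq_b1.
by rewrite modnDr (modn_small hr) divn2 addnC.
Qed.

Set Implicit Arguments. Unset Strict Implicit. Unset Printing Implicit Defensive.
Local Open Scope ring_scope.

Section Disc.
Variable R : realType.

Definition sg (b : bool) : R := if b then -1 else 1.

Definition Kd (Om Q : finType) (mu : Om -> R) (u : Om -> bool) (q : Om -> Q) : R :=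
  \sum_(x : Q) `| \sum_(o : Om) (q o == x)%:R * (sg (u o) * mu o) |.

Lemma sum_ind1 (I : finType) (i0 : I) (G : I -> R) :
  \sum_i (i == i0)%:R * G i = G i0.
Proof.
rewrite (bigD1 i0) //= eqxx mul1r big1 ?addr0 // => i /negbTE ->.
by rewrite mul0r.
Qed.

Lemma sum_pair (I J : finType) (F : I * J -> R) :
  \sum_(p : I * J) F p = \sum_i \sum_j F (i, j).
Proof. by rewrite pair_bigA; apply: eq_bigr => -[]. Qed.

Lemma le_sum_single (I : finType) (F : I -> R) i :
  (forall j, 0 <= F j) -> F i <= \sum_j F j.
Proof. by move=> h; rewrite (bigD1 i) //= lerDl sumr_ge0. Qed.

Lemma Kd_coarse (Om Q Q' : finType) (mu : Om -> R) u (q : Om -> Q) (h : Q -> Q') :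
  Kd mu u (fun o => h (q o)) <= Kd mu u q.
Proof.
rewrite /Kd.
set d := fun o => sg (u o) * mu o.
have E : forall y, \sum_o (h (q o) == y)%:R * d o =
    \sum_x (h x == y)%:R * \sum_o (q o == x)%:R * d o.
  move=> y; symmetry; under eq_bigr => x _ do rewrite big_distrr /=.
  rewrite exchange_big /=; apply: eq_bigr => o _.
  rewrite -(sum_ind1 (q o) (fun x => (h x == y)%:R * d o)).
  apply: eq_bigr => x _.
  by rewrite mulrCA [x == q o]eq_sym.
under eq_bigr => y _ do rewrite E.
apply: (le_trans (ler_sum _ (fun y _ => ler_norm_sum _ _ _))).
rewrite exchange_big /=; apply: ler_sum => x _.
rewrite -[X in _ <= X](sum_ind1 (h x) (fun _ => `|\sum_o (q o == x)%:R * d o|)).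
apply: ler_sum => y _; rewrite normrM eq_sym.
by case: eqP => _; rewrite ?normr0 ?normr1.
Qed.

Lemma abs4 (a b : R) : `|a| + `|b| <= `|a - b| + `|a + b|.
Proof.
have h1 : `|a *+ 2| <= `|a + b| + `|a - b|.
  rewrite (_ : a *+ 2 = (a + b) + (a - b)); first exact: ler_normD.
  by rewrite mulr2n; ring.
have h2 : `|b *+ 2| <= `|a + b| + `|a - b|.
  rewrite (_ : b *+ 2 = (a + b) - (a - b)); first exact: ler_normB.
  by rewrite mulr2n; ring.
rewrite !normrMn !mulr2n in h1 h2.
lra.
Qed.

Lemma sg_xor a b : sg (a (+) b) = sg a * sg b.
Proof. by case: a; case: b; rewrite /sg /= ?mulrNN ?mulr1 ?mul1r ?mulN1r. Qed.

Lemma sum_bool4 (Om : finType) (mu : Om -> R) (v w : Om -> bool) (c : Om -> bool)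
   (G : bool -> bool -> R) :
  \sum_o (c o)%:R * (G (v o) (w o) * mu o) =
  \sum_a \sum_b G a b * \sum_o (c o)%:R * ((v o == a)%:R * ((w o == b)%:R * mu o)).
Proof.
transitivity (\sum_o \sum_a \sum_b G a b * ((c o)%:R * ((v o == a)%:R * ((w o == b)%:R * mu o)))).
  apply: eq_bigr => o _; rewrite !big_bool /=.
  by case: (v o); case: (w o) => /=; ring.
rewrite exchange_big; apply: eq_bigr => a _; rewrite exchange_big /=.
by apply: eq_bigr => b _; rewrite big_distrr.
Qed.

Lemma Kd_plus (Om Q : finType) (mu : Om -> R) (v w : Om -> bool) (q : Om -> Q) :
  Kd mu w (fun o => (v o (+) w o, q o)) <= Kd mu v q + Kd mu w q.
Proof.
rewrite /Kd sum_pair exchange_big /= -big_split /=; apply: ler_sum => x _.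
set p := fun a b => \sum_o (q o == x)%:R * ((v o == a)%:R * ((w o == b)%:R * mu o)).
have E : forall G : bool -> bool -> R,
    \sum_o (q o == x)%:R * (G (v o) (w o) * mu o) =
    G true true * p true true + G true false * p true false
    + G false true * p false true + G false false * p false false.
  move=> G; rewrite (sum_bool4 _ v w (fun o => q o == x)) !big_bool /=.
  rewrite /p; ring.
have E1 : forall t, \sum_o ((v o (+) w o, q o) == (t, x))%:R * (sg (w o) * mu o)
   = \sum_o (q o == x)%:R * ((fun a b => (a (+) b == t)%:R * sg b) (v o) (w o) * mu o).
  move=> t; apply: eq_bigr => o _ /=.
  rewrite xpair_eqE; case: eqP; case: eqP => _ _ /=; ring.
rewrite big_bool /= !E1.
set a := p false false - p true true; set b := p true false - p false true.
have L1 : \sum_o (q o == x)%:R * ((v o (+) w o == true)%:R * sg (w o) * mu o) = b.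
  by rewrite (E (fun a b => (a (+) b == true)%:R * sg b)) /sg /b /=; ring.
have L2 : \sum_o (q o == x)%:R * ((v o (+) w o == false)%:R * sg (w o) * mu o) = a.
  by rewrite (E (fun a b => (a (+) b == false)%:R * sg b)) /sg /a /=; ring.
have L3 : \sum_o (q o == x)%:R * (sg (v o) * mu o) = a - b.
  by rewrite (E (fun a _ => sg a)) /sg /a /b /=; ring.
have L4 : \sum_o (q o == x)%:R * (sg (w o) * mu o) = a + b.
  by rewrite (E (fun _ b => sg b)) /sg /a /b /=; ring.
by rewrite L1 L2 L3 L4 addrC abs4.
Qed.


Section Indep.
Variables (A B St Qa Qb : finType) (mu : (A * St) * B -> R).
Hypothesis mu_ge0 : forall o, 0 <= mu o.
Definition muA g s := \sum_f mu ((g, s), f).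
Definition muB s f := \sum_g mu ((g, s), f).
Definition muS s := \sum_g \sum_f mu ((g, s), f).
Hypothesis Hind : forall g s f, mu ((g, s), f) * muS s = muA g s * muB s f.
Variables (a : A -> Qa) (b : B -> Qb).
Definition qA (o : (A * St) * B) := (a o.1.1, o.1.2).
Definition qB (o : (A * St) * B) := (b o.2, o.1.2).
Definition qF (o : (A * St) * B) := (a o.1.1, o.1.2, b o.2).

Lemma sumOm (F : (A * St) * B -> R) :
  \sum_o F o = \sum_g \sum_s \sum_f F ((g, s), f).
Proof.
by rewrite sum_pair sum_pair.
Qed.

Lemma muS_ge0 s : 0 <= muS s.
Proof. by apply: sumr_ge0 => g _; apply: sumr_ge0. Qed.
Lemma muA_ge0 g s : 0 <= muA g s.
Proof. exact: sumr_ge0. Qed.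
Lemma muB_ge0 s f : 0 <= muB s f.
Proof. exact: sumr_ge0. Qed.

Lemma muA_le g s : muA g s <= muS s.
Proof. by apply: (le_sum_single (F := fun g => muA g s)) => j; exact: muA_ge0. Qed.
Lemma muB_le s f : muB s f <= muS s.
Proof.
rewrite /muS exchange_big /=.
by apply: (le_sum_single (F := fun f => muB s f)) => j; exact: muB_ge0.
Qed.
Lemma mu_le g s f : mu ((g, s), f) <= muS s.
Proof.
apply: le_trans (muA_le g s).
by apply: (le_sum_single (F := fun f => mu ((g, s), f))).
Qed.

Lemma muS0A g s : muS s = 0 -> muA g s = 0.
Proof. by move=> h; apply/eqP; rewrite eq_le muA_ge0 -h muA_le. Qed.
Lemma muS0B f s : muS s = 0 -> muB s f = 0.
Proof. by move=> h; apply/eqP; rewrite eq_le muB_ge0 -h muB_le. Qed.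

Lemma mu_fact g s f : mu ((g, s), f) = muA g s * muB s f * (muS s)^-1.
Proof.
have [h|h] := eqVneq (muS s) 0.
  rewrite h invr0 mulr0; apply/eqP; rewrite eq_le mu_ge0 andbT -h.
  exact: mu_le.
by rewrite -Hind mulfK.
Qed.

Lemma collapse (G : St -> B -> R) s :
  \sum_s' \sum_f (s' == s)%:R * G s' f = \sum_f G s f.
Proof.
under eq_bigr => s' _ do rewrite -big_distrr /=.
exact: (sum_ind1 s (fun s' => \sum_f G s' f)).
Qed.


Lemma factor (phi : A -> R) (chi : B -> R) (Phi : (A * St) * B -> R)
  (HPhi : forall o, Phi o = phi o.1.1 * chi o.2) x s y :
  \sum_o (qF o == ((x, s), y))%:R * (Phi o * mu o) =
  (\sum_g (a g == x)%:R * (phi g * muA g s)) *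
  (\sum_f (b f == y)%:R * (chi f * muB s f)) * (muS s)^-1.
Proof.
rewrite sumOm.
transitivity (\sum_g \sum_s' \sum_f (s' == s)%:R *
   ((a g == x)%:R * (b f == y)%:R * (phi g * chi f * mu ((g, s'), f)))).
  apply: eq_bigr => g _; apply: eq_bigr => s' _; apply: eq_bigr => f _.
  rewrite HPhi /qF /= !xpair_eqE.
  by case: (a g == x); case: (s' == s); case: (b f == y) => /=; ring.
under eq_bigr => g _ do rewrite (collapse (fun s' f =>
   (a g == x)%:R * (b f == y)%:R * (phi g * chi f * mu ((g, s'), f)))).
rewrite !big_distrl /=; apply: eq_bigr => g _.
rewrite big_distrr big_distrl /=; apply: eq_bigr => f _.
rewrite mu_fact; ring.
Qed.

Lemma margA (phi : A -> R) (Phi : (A * St) * B -> R)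
  (HPhi : forall o, Phi o = phi o.1.1) x s :
  \sum_o (qA o == (x, s))%:R * (Phi o * mu o) =
  \sum_g (a g == x)%:R * (phi g * muA g s).
Proof.
rewrite sumOm; apply: eq_bigr => g _.
transitivity (\sum_s' \sum_f (s' == s)%:R * ((a g == x)%:R * (phi g * mu ((g, s'), f)))).
  apply: eq_bigr => s' _; apply: eq_bigr => f _.
  rewrite HPhi /qA /= !xpair_eqE.
  by case: (a g == x); case: (s' == s) => /=; ring.
rewrite (collapse (fun s' f => (a g == x)%:R * (phi g * mu ((g, s'), f)))).
by rewrite /muA !big_distrr.
Qed.

Lemma margB (chi : B -> R) (Phi : (A * St) * B -> R)
  (HPhi : forall o, Phi o = chi o.2) y s :
  \sum_o (qB o == (y, s))%:R * (Phi o * mu o) =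
  \sum_f (b f == y)%:R * (chi f * muB s f).
Proof.
rewrite sumOm.
transitivity (\sum_g \sum_s' \sum_f (s' == s)%:R * ((b f == y)%:R * (chi f * mu ((g, s'), f)))).
  apply: eq_bigr => g _; apply: eq_bigr => s' _; apply: eq_bigr => f _.
  rewrite HPhi /qB /= !xpair_eqE.
  by case: (b f == y); case: (s' == s) => /=; ring.
under eq_bigr => g _ do rewrite (collapse (fun s' f => (b f == y)%:R * (chi f * mu ((g, s'), f)))).
rewrite exchange_big /=; apply: eq_bigr => f _.
by rewrite /muB !big_distrr.
Qed.

Lemma sumAx s : \sum_x `|\sum_g (a g == x)%:R * (1 * muA g s)| = muS s.
Proof.
transitivity (\sum_x \sum_g (a g == x)%:R * (1 * muA g s)).
  apply: eq_bigr => x _; apply: ger0_norm; apply: sumr_ge0 => g _.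
  by rewrite mul1r mulr_ge0 ?ler0n ?muA_ge0.
rewrite exchange_big /=; apply: eq_bigr => g _.
rewrite (eq_bigr (fun x => (x == a g)%:R * (1 * muA g s))); last first.
  by move=> x _; rewrite eq_sym.
by rewrite sum_ind1 mul1r /muB.
Qed.

Lemma sumBy s : \sum_y `|\sum_f (b f == y)%:R * (1 * muB s f)| = muS s.
Proof.
transitivity (\sum_y \sum_f (b f == y)%:R * (1 * muB s f)).
  apply: eq_bigr => y _; apply: ger0_norm; apply: sumr_ge0 => f _.
  by rewrite mul1r mulr_ge0 ?ler0n ?muB_ge0.
rewrite exchange_big /= /muS [RHS]exchange_big /=; apply: eq_bigr => f _.
rewrite (eq_bigr (fun y => (y == b f)%:R * (1 * muB s f))); last first.
  by move=> y _; rewrite eq_sym.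
by rewrite sum_ind1 mul1r /muB.
Qed.

Lemma fin_cancel (A0 : R) s : (muS s = 0 -> A0 = 0) ->
  `|A0| * `|(muS s)^-1| * muS s = `|A0|.
Proof.
have [h|h] := eqVneq (muS s) 0.
  by move=> /(_ h) ->; rewrite normr0 !mul0r.
move=> _; rewrite (ger0_norm (x := (muS s)^-1)); last by rewrite invr_ge0 muS_ge0.
by rewrite -mulrA mulVf // mulr1.
Qed.

Lemma K_I1 (v : A -> bool) :
  Kd mu (fun o => v o.1.1) qF = Kd mu (fun o => v o.1.1) qA.
Proof.
rewrite /Kd sum_pair sum_pair [RHS]sum_pair.
apply: eq_bigr => x _; apply: eq_bigr => s _.
have HP : forall o : (A * St) * B, sg (v o.1.1) = sg (v o.1.1) * (fun _ => 1) o.2.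
  by move=> o; rewrite mulr1.
under eq_bigr => y _ do rewrite (factor (phi := fun g => sg (v g)) (chi := fun _ => 1) HP).
rewrite (margA (phi := fun g => sg (v g))) //.
under eq_bigr => y _ do rewrite !normrM mulrAC.
rewrite -big_distrr /= sumBy fin_cancel //.
move=> h0; apply: big1 => g _; by rewrite muS0A // !mulr0.
Qed.

Lemma K_I2 (w : B -> bool) :
  Kd mu (fun o => w o.2) qF = Kd mu (fun o => w o.2) qB.
Proof.
rewrite /Kd sum_pair sum_pair [RHS]sum_pair.
rewrite exchange_big /=; under eq_bigr => s _ do rewrite exchange_big /=.
rewrite [RHS]exchange_big /=.
apply: eq_bigr => s _; apply: eq_bigr => y _.
have HP : forall o : (A * St) * B, sg (w o.2) = (fun _ => 1) o.1.1 * sg (w o.2).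
  by move=> o; rewrite mul1r.
under eq_bigr => x _ do rewrite (factor (phi := fun _ => 1) (chi := fun f => sg (w f)) HP).
rewrite (margB (chi := fun f => sg (w f))) //.
under eq_bigr => x _ do rewrite !normrM [`|_| * `|_|]mulrC mulrAC.
rewrite -big_distrr /= sumAx fin_cancel //.
move=> h0; apply: big1 => f _; by rewrite muS0B // !mulr0.
Qed.

Lemma K_I3 (v : A -> bool) (w : B -> bool) (psi : R) :
  (forall s, (muS s)^-1 <= psi) ->
  Kd mu (fun o => v o.1.1 (+) w o.2) qF <=
  psi * (Kd mu (fun o => v o.1.1) qA * Kd mu (fun o => w o.2) qB).
Proof.
move=> Hpsi.
have HP : forall o : (A * St) * B, sg (v o.1.1 (+) w o.2) = sg (v o.1.1) * sg (w o.2).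
  by move=> o; rewrite sg_xor.
set KB := Kd mu (fun o => w o.2) qB.
have KBE : KB = \sum_y \sum_s `|\sum_f (b f == y)%:R * (sg (w f) * muB s f)|.
  rewrite /KB /Kd sum_pair; apply: eq_bigr => y _; apply: eq_bigr => s _.
  by rewrite (margB (chi := fun f => sg (w f))).
rewrite /Kd sum_pair sum_pair [X in _ <= _ * (X * _)]sum_pair big_distrl big_distrr /=.
apply: ler_sum => x _; rewrite big_distrl big_distrr /=.
apply: ler_sum => s _.
under eq_bigr => y _ do rewrite (factor (phi := fun g => sg (v g)) (chi := fun f => sg (w f)) HP).
rewrite (margA (phi := fun g => sg (v g))) //.
set Ax := `|_|.
under eq_bigr => y _ do rewrite !normrM mulrAC.
rewrite -big_distrr /=.
rewrite (ger0_norm (x := (muS s)^-1)); last by rewrite invr_ge0 muS_ge0.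
rewrite mulrCA -mulrA; apply: ler_wpM2l; first exact: normr_ge0.
apply: le_trans (_ : psi * \sum_y `|\sum_f (b f == y)%:R * (sg (w f) * muB s f)| <= _).
  apply: ler_wpM2r; last exact: Hpsi.
  by apply: sumr_ge0 => y _.
apply: ler_wpM2l.
  by apply: le_trans (Hpsi s); rewrite invr_ge0 muS_ge0.
rewrite KBE; apply: ler_sum => y _.
by apply: (le_sum_single (F := fun s => `|\sum_f (b f == y)%:R * (sg (w f) * muB s f)|)).
Qed.
End Indep.
End Disc.

Local Open Scope classical_set_scope.

Section Meas.
Context d (T : measurableType d) (R : realType) (P : probability T R).

Definition mfib (Om : finType) (F : T -> Om) := forall o, measurable [set w | F w = o].
Definition pmfF (Om : finType) (F : T -> Om) (o : Om) : R := Pr P [set w | F w = o].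

Lemma Pr_seq (Om : finType) (F : T -> Om) : mfib F -> forall s : seq Om, uniq s ->
  measurable [set w | F w \in s] /\
  Pr P [set w | F w \in s] = \sum_(o <- s) Pr P [set w | F w = o].
Proof.
move=> hF; elim=> [|a s IH] /=.
  move=> _; rewrite big_nil.
  have -> : [set w | F w \in [::]] = set0.
    by apply/seteqP; split => w //=.
  by split; [exact: measurable0 | rewrite /Pr measure0].
move=> /andP [nas us]; have [m1 e1] := IH us.
have -> : [set w | F w \in a :: s] = [set w | F w = a] `|` [set w | F w \in s].
  apply/seteqP; split => w /=; rewrite in_cons.
    by case/orP => [/eqP ->|h]; [left|right].
  by case => [->|->]; rewrite ?eqxx ?orbT.
split; first exact: measurableU.
rewrite big_cons /Pr measureU //.
- rewrite fineD; first by rewrite -e1.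
  + exact: fin_num_measure.
  + exact: fin_num_measure.
- apply/seteqP; split => w //= [h1 h2]; move: nas; by rewrite -h1 h2.
Qed.

Lemma Pr_pred (Om : finType) (F : T -> Om) (E : pred Om) : mfib F ->
  measurable [set w | E (F w)] /\
  Pr P [set w | E (F w)] = \sum_o (E o)%:R * Pr P [set w | F w = o].
Proof.
move=> hF.
have [m1 e1] := Pr_seq hF (filter_uniq E (index_enum_uniq Om)).
have -> : [set w | E (F w)] = [set w | F w \in [seq o <- index_enum Om | E o]].
  by apply: boolp.funext => w /=; rewrite mem_filter mem_index_enum andbT.
split=> //; rewrite e1 big_filter big_mkcond /=.
by apply: eq_bigr => o _; case: (E o); rewrite ?mul1r ?mul0r.
Qed.

Lemma mfib_comp (Om Om' : finType) (F : T -> Om) (h : Om -> Om') :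
  mfib F -> mfib (fun w => h (F w)).
Proof.
move=> hF o.
have -> : [set w | h (F w) = o] = [set w | (fun x => h x == o) (F w)].
  by apply/seteqP; split => w /=; [move=> ->; rewrite eqxx | move/eqP].
exact: (Pr_pred (fun x => h x == o) hF).1.
Qed.

Lemma mfib_pair (O1 O2 : finType) (F : T -> O1) (G : T -> O2) :
  mfib F -> mfib G -> mfib (fun w => (F w, G w)).
Proof.
move=> hF hG [a b].
have -> : [set w | (F w, G w) = (a, b)] = [set w | F w = a] `&` [set w | G w = b].
  by apply/seteqP; split => w /=; [case=> -> -> | case=> -> ->].
exact: measurableI.
Qed.

Lemma mfib_ffun m (Om : finType) (F : 'I_m -> T -> Om) :
  (forall i, mfib (F i)) -> mfib (fun w => [ffun i => F i w]).
Proof.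
move=> hF f.
have h : forall s : seq 'I_m, measurable [set w | forall i, i \in s -> F i w = f i].
  elim=> [|a s IH].
    have -> : [set w | forall i, i \in [::] -> F i w = f i] = setT.
      by apply/seteqP; split => w //=.
    exact: measurableT.
  have -> : [set w | forall i, i \in a :: s -> F i w = f i] =
            [set w | F a w = f a] `&` [set w | forall i, i \in s -> F i w = f i].
    apply/seteqP; split => w /=.
      by move=> H; split; [apply: H; rewrite in_cons eqxx | move=> i hi; apply: H; rewrite in_cons hi orbT].
    by case=> H1 H2 i; rewrite in_cons => /orP [/eqP ->|]; [exact: H1 | exact: H2].
  by apply: measurableI; [exact: hF | exact: IH].
have -> : [set w | [ffun i => F i w] = f] = [set w | forall i, i \in enum 'I_m -> F i w = f i].
  apply/seteqP; split => w /=.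
    by move=> <- i _; rewrite ffunE.
  by move=> H; apply/ffunP => i; rewrite ffunE H // mem_enum.
exact: h.
Qed.

Lemma pmfF_ge0 (Om : finType) (F : T -> Om) o : 0 <= pmfF F o.
Proof. by apply: fine_ge0; apply: measure_ge0. Qed.

Lemma Kcond_Kd (Om Q : finType) (F : T -> Om) (u : Om -> bool) (q : Om -> Q) :
  mfib F -> Kcond P (fun w => u (F w)) (fun w => q (F w)) = Kd (pmfF F) u q.
Proof.
move=> hF; rewrite /Kcond /Kd; apply: eq_bigr => x _; congr `|_|.
pose E1 b := fun o => (u o == b) && (q o == x).
have E : forall b, [set w | u (F w) = b /\ q (F w) = x] = [set w | E1 b (F w)].
  move=> b; rewrite /E1; apply/seteqP; split => w /=.
    by case=> -> ->; rewrite !eqxx.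
  by case/andP => /eqP -> /eqP ->.
rewrite !E (Pr_pred (E1 false) hF).2 (Pr_pred (E1 true) hF).2 -sumrB; apply: eq_bigr => o _.
rewrite /pmfF /sg /E1; case: (u o); case: (q o == x) => /=; ring.
Qed.

End Meas.

Definition fget (U : Type) m (f : {ffun 'I_m -> U}) (dflt : U) (i : nat) : U :=
  if insub i is Some j then f j else dflt.

Lemma fget_nat (U : Type) m (f : {ffun 'I_m -> U}) dflt i (h : (i < m)%N) :
  fget f dflt i = f (Ordinal h).
Proof. by rewrite /fget insubT. Qed.

Section Main.
Context d (T : measurableType d) (R : realType) (P : probability T R) (Yt St : finType)
  (X : int -> T -> bool) (Y : int -> T -> Yt) (S : int -> T -> St).
Variable n : nat.

Lemma N_gt0 : (0 < 2 ^ n)%N. Proof. by rewrite expn_gt0. Qed.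
Lemma NL_lt : ((2 ^ n).-1 < 2 ^ n)%N. Proof. by rewrite ltn_predL N_gt0. Qed.
Definition o0 : 'I_(2 ^ n) := Ordinal N_gt0.
Definition oL : 'I_(2 ^ n) := Ordinal NL_lt.

Notation Blk := {ffun 'I_(2 ^ n) -> bool * Yt * St}.

Definition Pw (w : T) : Blk :=
  [ffun l : 'I_(2 ^ n) => (X (Posz l.+1) w, Y (Posz l.+1) w, S (Posz l) w)].
Definition Zw (k : int) m (w : T) : {ffun 'I_m -> bool * Yt * St} :=
  [ffun l : 'I_m => Defs.Zp X Y S (k + Posz l) w].
Definition FF (w : T) : (Blk * St) * Blk :=
  ((Pw w, S (Posz (2 ^ n)) w), Zw (Posz (2 ^ n).+1) (2 ^ n) w).

Definition uO c (g : Blk) : bool := \big[addb/false]_(r < 2 ^ n) ((g r).1.1 && GN n r c).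
Definition aO c (g : Blk) := ([ffun k : 'I_c => uO k g], [ffun j : 'I_(2 ^ n) => (g j).1.2], (g o0).2).
Definition bO c (g : Blk) := ([ffun k : 'I_c => uO k g], [ffun j : 'I_(2 ^ n) => (g j).1.2], (g oL).2).

Lemma P1 c w : U X n c w = uO c (Pw w).
Proof. by rewrite /U /uO; apply: eq_bigr => r _; rewrite ffunE. Qed.

Lemma P2 c w : Wh X n c w = uO c (Zw (Posz (2 ^ n).+1) (2 ^ n) w).
Proof.
rewrite /Wh /uO; apply: eq_bigr => r _; rewrite ffunE /Defs.Zp /=.
by rewrite -PoszD addSn.
Qed.


Hypotheses (mX : forall j b, measurable [set w | X j w = b])
  (mY : forall j y, measurable [set w | Y j w = y])
  (mS : forall j s, measurable [set w | S j w = s]).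

Lemma mfibZp j : mfib (fun w => Defs.Zp X Y S j w).
Proof. exact: mfib_pair (mfib_pair (mX j) (mY j)) (mS j). Qed.
Lemma mfibZw k m : mfib (Zw k m).
Proof. by apply: (mfib_ffun (F := fun l w => Defs.Zp X Y S (k + Posz l) w)) => l; exact: mfibZp. Qed.
Lemma mfibPw : mfib Pw.
Proof.
apply: (mfib_ffun (F := fun (l : 'I_(2 ^ n)) w => (X (Posz l.+1) w, Y (Posz l.+1) w, S (Posz l) w))) => l.
exact: (mfib_pair (F := fun w => (X (Posz l.+1) w, Y (Posz l.+1) w)) (G := S (Posz l))
  (mfib_pair (F := X _) (G := Y _) (mX _) (mY _)) (mS _)).
Qed.
Lemma mfibFF : mfib FF.
Proof.
have h1 := mfib_pair mfibPw (mS (Posz (2 ^ n))).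
have h2 := mfib_pair h1 (mfibZw (Posz (2 ^ n).+1) (m := (2 ^ n)%N)).
exact: h2.
Qed.

Definition mu := pmfF P FF.

Lemma Kd_ext (Om Q : finType) (m : Om -> R) u (q1 q2 : Om -> Q) :
  (forall o, q1 o = q2 o) -> Kd m u q1 = Kd m u q2.
Proof. by move=> h; rewrite (boolp.funext h). Qed.

Lemma Kd_reorder (Om Q Q' : finType) (m : Om -> R) u (q : Om -> Q) (h : Q -> Q') (h' : Q' -> Q) :
  (forall x, h' (h x) = x) -> Kd m u (fun o => h (q o)) = Kd m u q.
Proof.
move=> hh; apply/eqP; rewrite eq_le Kd_coarse /=.
by rewrite -{1}(Kd_ext m u (q1 := fun o => h' (h (q o))) (q2 := q)) // Kd_coarse.
Qed.

Definition hA c (p : ({ffun 'I_c -> bool} * {ffun 'I_(2 ^ n) -> Yt} * St) * St) :=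
  (p.1.1.1, p.1.1.2, p.2, p.1.2).
Definition hA' c (p : {ffun 'I_c -> bool} * {ffun 'I_(2 ^ n) -> Yt} * St * St) :=
  ((p.1.1.1, p.1.1.2, p.2), p.1.2).

Lemma Khat_first c : Khat P X Y S n c = Kd mu (fun o => uO c o.1.1) (qA (aO c)).
Proof.
rewrite -(@Kd_reorder _ _ _ mu (fun o => uO c o.1.1) (qA (aO c)) (@hA c) (@hA' c)); last by case=> [[[]]].
rewrite -Kcond_Kd; last exact: mfibFF.
rewrite /Khat.
have e1 : U X n c = (fun w => uO c (FF w).1.1) by apply: boolp.funext => w; exact: P1.
rewrite e1; apply: congr1; apply: boolp.funext => w.
rewrite /hA /qA /aO /FF /=; congr (_, _, _, _).
  by apply/ffunP => k; rewrite !ffunE P1.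
by apply/ffunP => j; rewrite !ffunE.
by rewrite ffunE.
Qed.


Definition u1 c (om : {ffun 'I_(2 ^ n).+1 -> bool * Yt * St}) :=
  \big[addb/false]_(r < 2 ^ n) ((om (lift ord0 r)).1.1 && GN n r c).
Definition q1 c (om : {ffun 'I_(2 ^ n).+1 -> bool * Yt * St}) :=
  ([ffun k : 'I_c => u1 k om], [ffun j : 'I_(2 ^ n) => (om (lift ord0 j)).1.2],
   (om ord_max).2, (om ord0).2).

Hypothesis Hstat : forall (k : int) (m : nat) (f : 'I_m -> bool * Yt * St),
  Pr P (win_ev X Y S k f) = Pr P (win_ev X Y S 0 f).

Lemma Zw_win k m (o : {ffun 'I_m -> bool * Yt * St}) :
  [set w | Zw k m w = o] = win_ev X Y S k o.
Proof.
apply/seteqP; split => w /=.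
  by move=> <- l; rewrite ffunE.
by move=> h; apply/ffunP => l; rewrite ffunE h.
Qed.

Lemma pmf_stat k m : pmfF P (Zw k m) = pmfF P (Zw 0 m).
Proof. by apply: boolp.funext => o; rewrite /pmfF !Zw_win Hstat. Qed.

Lemma Khat_second c : Khat P X Y S n c = Kd mu (fun o => uO c o.2) (qB (bO c)).
Proof.
transitivity (Kcond P (fun w => u1 c (Zw 0 (2 ^ n).+1 w)) (fun w => q1 c (Zw 0 (2 ^ n).+1 w))).
  rewrite /Khat.
  have e1 : forall c, U X n c = (fun w => u1 c (Zw 0 (2 ^ n).+1 w)).
    move=> c'; apply: boolp.funext => w; rewrite /U /u1; apply: eq_bigr => r _.
    by rewrite ffunE /Defs.Zp lift0 add0r.
  rewrite e1; apply: congr1; apply: boolp.funext => w.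
  rewrite /q1; congr (_, _, _, _).
  - by apply/ffunP => k; rewrite !ffunE e1.
  - by apply/ffunP => j; rewrite !ffunE /Defs.Zp lift0 add0r.
  - by rewrite ffunE /Defs.Zp /= add0r.
  - by rewrite ffunE /Defs.Zp /= add0r.
rewrite Kcond_Kd; last exact: mfibZw.
rewrite -(pmf_stat (Posz (2 ^ n))) -Kcond_Kd; last exact: mfibZw.
rewrite /mu -Kcond_Kd; last exact: mfibFF.
have e2 : forall c, (fun w => u1 c (Zw (Posz (2 ^ n)) (2 ^ n).+1 w)) = (fun w => uO c (FF w).2).
  move=> c'; apply: boolp.funext => w; rewrite /u1 /uO; apply: eq_bigr => r _.
  by rewrite !ffunE /Defs.Zp lift0 -!PoszD addnS addSn.
rewrite e2; apply: congr1; apply: boolp.funext => w.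
rewrite /q1 /qB /bO /FF /=; congr (_, _, _, _).
- by apply/ffunP => k; rewrite !ffunE; move: (e2 k) => /(congr1 (fun f => f w)).
- by apply/ffunP => j; rewrite !ffunE /Defs.Zp lift0 -!PoszD addnS addSn.
- rewrite !ffunE /Defs.Zp /= -!PoszD addSn -addnS prednK //; exact: N_gt0.
- by rewrite ffunE /Defs.Zp /= addr0.
Qed.


Notation Qa c := ({ffun 'I_c -> bool} * {ffun 'I_(2 ^ n) -> Yt} * St)%type.

Definition hval c (p : (Qa c * St) * Qa c) (k : nat) : bool :=
  (~~ odd k && fget p.1.1.1.1 false k./2) (+) fget p.2.1.1 false k./2.
Definition yfull c (p : (Qa c * St) * Qa c) (j : nat) : Yt :=
  if (j < 2 ^ n)%N then fget p.1.1.1.2 (p.1.1.1.2 o0) j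
  else fget p.2.1.2 (p.2.1.2 o0) (j - 2 ^ n).
Definition hM c (p : (Qa c * St) * Qa c) :=
  ([ffun k : 'I_(c.*2) => hval p k], [ffun j : 'I_(2 ^ n.+1) => yfull p j], p.2.2, p.1.1.2).
Definition hP c (tp : bool * ((Qa c * St) * Qa c)) :=
  ([ffun k : 'I_(c.*2.+1) => if (k < c.*2)%N then hval tp.2 k else tp.1],
   [ffun j : 'I_(2 ^ n.+1) => yfull tp.2 j], tp.2.2.2, tp.2.1.1.2).

Lemma PU c k w : (c < 2 ^ n)%N -> (k < c.*2)%N ->
  U X n.+1 k w = hval (qF (aO c) (bO c) (FF w)) k.
Proof.
move=> hc hk.
have hk2 : (k./2 < c)%N by rewrite ltn_half_double.
rewrite U_split; last by rewrite expnS -muln2 in hk *; lia.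
rewrite /hval /qF /aO /bO /FF /= !(fget_nat _ _ hk2) !ffunE /=.
by rewrite P1 P2.
Qed.

Lemma PY c j w : (j < 2 ^ n.+1)%N ->
  Y (Posz j.+1) w = yfull (qF (aO c) (bO c) (FF w)) j.
Proof.
move=> hj; rewrite /yfull; case: ifP => hjN.
  by rewrite /qF /aO /FF /= (fget_nat _ _ hjN) !ffunE.
have hj2 : (j - 2 ^ n < 2 ^ n)%N by rewrite expnS in hj; lia.
rewrite /qF /bO /FF /= (fget_nat _ _ hj2) !ffunE /Defs.Zp /= -PoszD.
by congr (Y (Posz _) w); move: hjN => /negbT; rewrite -leqNgt; lia.
Qed.

Lemma U2c c w : (c < 2 ^ n)%N -> U X n.+1 c.*2 w =
  uO c (Pw w) (+) uO c (Zw (Posz (2 ^ n).+1) (2 ^ n) w).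
Proof.
move=> hc; rewrite U_split; last by rewrite expnS -muln2 in hc *; lia.
by rewrite odd_double doubleK /= P1 P2.
Qed.

Lemma Khat_minus c : (c < 2 ^ n)%N ->
  Khat P X Y S n.+1 c.*2 =
  Kd mu (fun o => uO c o.1.1 (+) uO c o.2) (fun o => hM (qF (aO c) (bO c) o)).
Proof.
move=> hc; rewrite /mu -Kcond_Kd; last exact: mfibFF.
rewrite /Khat.
have e1 : U X n.+1 c.*2 = (fun w => uO c (FF w).1.1 (+) uO c (FF w).2).
  by apply: boolp.funext => w; rewrite U2c.
rewrite e1; apply: congr1; apply: boolp.funext => w.
rewrite /hM; congr (_, _, _, _).
- by apply/ffunP => k; rewrite !ffunE (@PU c k w hc (ltn_ord k)).
- by apply/ffunP => j; rewrite !ffunE (@PY c j w (ltn_ord j)).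
- rewrite /qF /bO /FF /= ffunE /Defs.Zp /= -PoszD addSn -addnS prednK ?N_gt0 //.
  by rewrite expnS mul2n -addnn.
- by rewrite /qF /aO /FF /= ffunE.
Qed.

Lemma Khat_plus c : (c < 2 ^ n)%N ->
  Khat P X Y S n.+1 c.*2.+1 =
  Kd mu (fun o => uO c o.2) (fun o => hP (uO c o.1.1 (+) uO c o.2, qF (aO c) (bO c) o)).
Proof.
move=> hc; rewrite /mu -Kcond_Kd; last exact: mfibFF.
rewrite /Khat.
have e1 : U X n.+1 c.*2.+1 = (fun w => uO c (FF w).2).
  apply: boolp.funext => w; rewrite U_split; last by rewrite expnS -muln2 in hc *; lia.
  have -> : (c.*2.+1)./2 = c by rewrite -add1n (half_bit_double c true).
  by rewrite /= odd_double /= P2.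
rewrite e1; apply: congr1; apply: boolp.funext => w.
rewrite /hP; congr (_, _, _, _).
- apply/ffunP => k; rewrite !ffunE /=; case: ifP => hk; first exact: PU.
  have -> : nat_of_ord k = c.*2 by have := ltn_ord k; move: hk => /negbT; rewrite -leqNgt; lia.
  by rewrite U2c.
- by apply/ffunP => j; rewrite !ffunE (@PY c j w (ltn_ord j)).
- rewrite /qF /bO /FF /= ffunE /Defs.Zp /= -PoszD addSn -addnS prednK ?N_gt0 //.
  by rewrite expnS mul2n -addnn.
- by rewrite /qF /aO /FF /= ffunE.
Qed.


Hypothesis Hindep : forall (j : int) (m1 m2 : nat) (f : 'I_m1 -> bool * Yt * St)
  (g : 'I_m2 -> bool * Yt * St) (s : St),
  Pr P (win_ev X Y S j f `&` past_ev X Y S j g `&` Sev S (j - 1) s) * Pr P (Sev S (j - 1) s)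
  = Pr P (win_ev X Y S j f `&` Sev S (j - 1) s) * Pr P (past_ev X Y S j g `&` Sev S (j - 1) s).
Hypothesis HSstat : forall (k : int) (a : St), Pr P (Sev S k a) = Pr P (Sev S 0 a).

Lemma ej : (Posz (2 ^ n).+1 - 1 = Posz (2 ^ n))%R.
Proof. by rewrite -addn1 PoszD addrK. Qed.

Lemma Sev_eq s : Sev S (Posz (2 ^ n).+1 - 1) s = [set w | S (Posz (2 ^ n)) w = s].
Proof. by rewrite ej. Qed.

Lemma past_eq (g : Blk) : past_ev X Y S (Posz (2 ^ n).+1) g = [set w | Pw w = g].
Proof.
have et : forall l : nat, (Posz (2 ^ n).+1 - Posz (2 ^ n) + Posz l = Posz l.+1)%R.
  by move=> l; lia.
have et1 : forall l : nat, (Posz l.+1 - 1 = Posz l)%R.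
  by move=> l; rewrite -addn1 PoszD addrK.
apply/seteqP; split => w /=.
  by move=> H; apply/ffunP => l; rewrite ffunE; have := H l; rewrite /= et et1.
by move=> <- l /=; rewrite ffunE et et1.
Qed.

Lemma mu_ge0 o : 0 <= mu o.
Proof. exact: pmfF_ge0. Qed.

Lemma muS_eq s : muS mu s = Pr P (Sev S (Posz (2 ^ n).+1 - 1) s).
Proof.
rewrite Sev_eq.
have -> : [set w | S (Posz (2 ^ n)) w = s] = [set w | (fun o => o.1.2 == s) (FF w)].
  by apply/seteqP; split => w /=; [move=> ->; rewrite eqxx | move/eqP].
rewrite (Pr_pred P (fun o => o.1.2 == s) mfibFF).2 sumOm /muS; apply: eq_bigr => g _.
symmetry; exact: (collapse (fun s' f => mu ((g, s'), f))).
Qed.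

Lemma muA_eq g s : muA mu g s = Pr P (past_ev X Y S (Posz (2 ^ n).+1) g `&` Sev S (Posz (2 ^ n).+1 - 1) s).
Proof.
rewrite Sev_eq past_eq.
have -> : [set w | Pw w = g] `&` [set w | S (Posz (2 ^ n)) w = s] =
          [set w | (fun o => o.1 == (g, s)) (FF w)].
  apply/seteqP; split => w /=; first by case=> -> ->; rewrite eqxx.
  by move/eqP => [-> ->].
rewrite (Pr_pred P (fun o => o.1 == (g, s)) mfibFF).2 sumOm.
transitivity (\sum_g' (g' == g)%:R * \sum_s' \sum_f (s' == s)%:R * mu ((g', s'), f)).
  by rewrite (sum_ind1 g (fun g' => \sum_s' \sum_f (s' == s)%:R * mu ((g', s'), f))) collapse.
apply: eq_bigr => g' _; rewrite !big_distrr; apply: eq_bigr => s' _.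
rewrite big_distrr; apply: eq_bigr => f _ /=.
rewrite /pmfF xpair_eqE; case: (g' == g); case: (s' == s); rewrite /= ?mul1r ?mul0r ?mulr0 //.
Qed.

Lemma muB_eq s f : muB mu s f = Pr P (win_ev X Y S (Posz (2 ^ n).+1) f `&` Sev S (Posz (2 ^ n).+1 - 1) s).
Proof.
rewrite Sev_eq -Zw_win.
have -> : [set w | Zw (Posz (2 ^ n).+1) (2 ^ n) w = f] `&` [set w | S (Posz (2 ^ n)) w = s] =
          [set w | (fun o => (o.1.2 == s) && (o.2 == f)) (FF w)].
  apply/seteqP; split => w /=; first by case=> -> ->; rewrite !eqxx.
  by case/andP => /eqP -> /eqP ->.
rewrite (Pr_pred P (fun o => (o.1.2 == s) && (o.2 == f)) mfibFF).2 sumOm /muB; apply: eq_bigr => g _.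
symmetry; transitivity (\sum_s' \sum_f' (s' == s)%:R * ((f' == f)%:R * mu ((g, s'), f'))).
  apply: eq_bigr => s' _; apply: eq_bigr => f' _ /=.
  by case: (s' == s); case: (f' == f); rewrite /= ?mul1r ?mul0r ?mulr0.
rewrite (collapse (fun s' f' => (f' == f)%:R * mu ((g, s'), f'))).
exact: (sum_ind1 f (fun f' => mu ((g, s), f'))).
Qed.

Lemma mu_eq g s f : mu ((g, s), f) =
  Pr P (win_ev X Y S (Posz (2 ^ n).+1) f `&` past_ev X Y S (Posz (2 ^ n).+1) g `&`
        Sev S (Posz (2 ^ n).+1 - 1) s).
Proof.
rewrite Sev_eq past_eq -Zw_win /mu /pmfF /FF; congr Pr.
apply/seteqP; split => w /=; first by case=> -> -> ->.
by case=> [[-> ->] ->].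
Qed.

Lemma mu_Hind g s f : mu ((g, s), f) * muS mu s = muA mu g s * muB mu s f.
Proof. by rewrite mu_eq muS_eq muA_eq muB_eq Hindep mulrC. Qed.

Lemma mu_psi s : (muS mu s)^-1 <= psi0 P S.
Proof.
rewrite muS_eq HSstat /psi0.
exact: (le_bigmax _ (fun a => (Pr P (Sev S 0 a))^-1) s).
Qed.

Lemma main_bounds c : (c < 2 ^ n)%N ->
  and (Khat P X Y S n.+1 c.*2 <= psi0 P S * Khat P X Y S n c ^+ 2)
  (Khat P X Y S n.+1 c.*2.+1 <= 2 * Khat P X Y S n c).
Proof.
move=> hc; split.
  rewrite Khat_minus // expr2 {1}Khat_first Khat_second.
  apply: le_trans (Kd_coarse _ _ _ _) _.
  exact: (K_I3 mu_ge0 mu_Hind (aO c) (bO c) (uO c) (uO c) mu_psi).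
rewrite Khat_plus //.
apply: le_trans (Kd_coarse _ _ _ _) _.
apply: le_trans (Kd_plus _ _ _ _) _.
rewrite (K_I1 mu_ge0 mu_Hind (aO c) (bO c) (uO c)) (K_I2 mu_ge0 mu_Hind (aO c) (bO c) (uO c)).
rewrite -Khat_first -Khat_second.
lra.
Qed.

End Main.

End PropHelpers.
Import PropHelpers.
Local Open Scope ring_scope.

(* i_n - 1 = c (0-indexed), so i_{n+1} - 1 = 2c + B_{n+1}. *)
Theorem proposition2 (d : measure_display) (T : measurableType d) (R : realType)
  (P : probability T R) (Yt St : finType)
  (X : int -> T -> bool) (Y : int -> T -> Yt) (S : int -> T -> St) :
  FAIM P X Y S -> state_chain P S ->
  forall n : nat, (1 <= n)%N -> forall c : nat, (c < 2 ^ n)%N ->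
    Khat P X Y S n.+1 c.*2 <= psi0 P S * Khat P X Y S n c ^+ 2 /\
    Khat P X Y S n.+1 c.*2.+1 <= 2 * Khat P X Y S n c.
Proof.
case=> [[mX mY mS] Hstat _ Hind] [HS _] n _ c hc.
exact: (main_bounds mX mY mS Hstat Hind HS hc).
Qed.
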